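(* Let $X,Z\in\mathbb{R}^{n\times r}$ with $XX^{T}\ne ZZ^{T}$. Then $$\delta(X,Z)\ge\max_{t\ge0}\frac{\cos\theta(t)-t}{1+t},$$ where for $t\ge0$, $$\cos\theta(t):=\max_{y,\,W_{i,j}}\left\{\frac{\mathbf{e}^{T}[\mathbf{J}y-w]}{\|\mathbf{e}\|\,\|\mathbf{J}y-w\|}\;:\;\frac{\langle\mathbf{J}^{T}\mathbf{J},W\rangle}{\|\mathbf{e}\|\,\|\mathbf{J}y-w\|}=2t,\;W\succeq0\right\},$$ the maximization being over $y\in\mathbb{R}^{nr}$ and $W_{i,j}\in\mathbb{R}^{n\times n}$ for $i,j\in\{1,\dots,r\}$, with $W=[W_{i,j}]_{i,j=1}^{r}\in\mathbb{R}^{nr\times nr}$ and $w=\sum_{i=1}^{r}\mathrm{vec}(W_{i,i})$.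
   Context: $\mathbf{e}=\mathrm{vec}(XX^{T}-ZZ^{T})\in\mathbb{R}^{n^{2}}$ (column-stacking vectorization) and $\mathbf{J}\in\mathbb{R}^{n^{2}\times nr}$ satisfies $\mathbf{J}\,\mathrm{vec}(Y)=\mathrm{vec}(XY^{T}+YX^{T})$ for all $Y\in\mathbb{R}^{n\times r}$; $\langle A,B\rangle=\mathrm{tr}(A^{T}B)$. A linear map $\mathcal{A}:\mathbb{R}^{n\times n}\to\mathbb{R}^{m}$ satisfies $(\delta,p)$-RIP if $0\le\delta<1$ and there is $\nu>0$ with $(1-\delta)\|E\|_{F}^{2}\le\frac{1}{\nu}\|\mathcal{A}(E)\|^{2}\le(1+\delta)\|E\|_{F}^{2}$ for all $E$ of rank at most $p$. With $r^{\star}=\mathrm{rank}(Z)$, $\delta(X,Z)$ is the infimum of all $\delta$ for which there exist $m\ge1$ and linear $\mathcal{A}:\mathbb{R}^{n\times n}\to\mathbb{R}^{m}$ satisfying $(\delta,r+r^{\star})$-RIP with $\nabla f_{\mathcal{A}}(X)=0$ and $\nabla^{2}f_{\mathcal{A}}(X)\succeq0$, where $f_{\mathcal{A}}(U)=\|\mathcal{A}(UU^{T}-ZZ^{T})\|^{2}$ on $\mathbb{R}^{n\times r}$. *)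

(* Defs.v *)
From HB Require Import structures.
From mathcomp Require Import all_boot all_order all_algebra.
From mathcomp Require Import all_classical all_reals all_analysis.
Set Implicit Arguments. Unset Strict Implicit. Unset Printing Implicit Defensive.
Import Order.TTheory GRing.Theory Num.Theory.
Local Open Scope ring_scope.
Local Open Scope classical_set_scope.

Section Defs.
Variable R : realType.

(* column-stacking vectorization: vec A has entry A a j at index j*m + a
   (index (j,a) via mxvec_index), i.e. the columns of A stacked. *)
Definition vec (m k : nat) (A : 'M[R]_(m, k)) : 'cV[R]_(k * m) := (mxvec A^T)^T.

Definition sqnorm (p : nat) (v : 'cV[R]_p) : R := \sum_i (v i 0) ^+ 2.
Definition enorm (p : nat) (v : 'cV[R]_p) : R := Num.sqrt (sqnorm v).

Definition frob2 (m k : nat) (E : 'M[R]_(m, k)) : R := \sum_i \sum_j (E i j) ^+ 2.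

Definition mxinner (m k : nat) (A B : 'M[R]_(m, k)) : R := \tr (A^T *m B).

Definition psd (p : nat) (W : 'M[R]_p) : Prop :=
  W^T = W /\ forall x : 'cV[R]_p, 0 <= (x^T *m W *m x) 0 0.

Definition RIP (n m : nat) (A : {linear 'M[R]_n -> 'cV[R]_m}) (delta : R) (p : nat) : Prop :=
  0 <= delta < 1 /\
  exists nu : R, 0 < nu /\
    forall E : 'M[R]_n, (\rank E <= p)%N ->
      (1 - delta) * frob2 E <= sqnorm (A E) / nu /\
      sqnorm (A E) / nu <= (1 + delta) * frob2 E.

Definition fA (n r m : nat) (A : {linear 'M[R]_n -> 'cV[R]_m}) (Z : 'M[R]_(n, r))
  (U : 'M[R]_(n, r)) : R := sqnorm (A (U *m U^T - Z *m Z^T)).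

Definition grad_zero (n r m : nat) (A : {linear 'M[R]_n -> 'cV[R]_m})
  (X Z : 'M[R]_(n, r)) : Prop :=
  forall Y : 'M[R]_(n, r), derive1 (fun s : R => fA A Z (X + s *: Y)) 0 = 0.

Definition hess_psd (n r m : nat) (A : {linear 'M[R]_n -> 'cV[R]_m})
  (X Z : 'M[R]_(n, r)) : Prop :=
  forall Y : 'M[R]_(n, r), 0 <= derive1n 2 (fun s : R => fA A Z (X + s *: Y)) 0.

Definition admissible_delta (n r : nat) (X Z : 'M[R]_(n, r)) (d : R) : Prop :=
  exists m : nat, (1 <= m)%N /\
    exists A : {linear 'M[R]_n -> 'cV[R]_m},
      RIP A d (r + \rank Z) /\ grad_zero A X Z /\ hess_psd A X Z.

(* delta(X,Z) : infimum (in the extended reals; +oo if no admissible delta) *)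
Definition delta_XZ (n r : nat) (X Z : 'M[R]_(n, r)) : \bar R :=
  ereal_inf [set d%:E | d in admissible_delta X Z].

Definition evec (n r : nat) (X Z : 'M[R]_(n, r)) : 'cV[R]_(n * n) :=
  vec (X *m X^T - Z *m Z^T).

(* block W_{i,j} (n x n) of W in R^{nr x nr}, i,j in {1..r} *)
Definition blk (n r : nat) (W : 'M[R]_(r * n)) (i j : 'I_r) : 'M[R]_n :=
  \matrix_(a < n, b < n) W (mxvec_index i a) (mxvec_index j b).

Definition wvec (n r : nat) (W : 'M[R]_(r * n)) : 'cV[R]_(n * n) :=
  \sum_(i < r) vec (blk W i i).

(* c is the objective value of a feasible point (y, W) of the program
   defining cos theta(t) *)
Definition cos_theta_value (n r : nat) (X Z : 'M[R]_(n, r))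
  (J : 'M[R]_(n * n, r * n)) (t c : R) : Prop :=
  exists (y : 'cV[R]_(r * n)) (W : 'M[R]_(r * n)),
    let e := evec X Z in
    let v := J *m y - wvec W in
    v != 0 /\ psd W /\
    mxinner (J^T *m J) W / (enorm e * enorm v) = 2 * t /\
    c = (e^T *m v) 0 0 / (enorm e * enorm v).

End Defs.

(* Main.v *)
Require Import Defs.
From HB Require Import structures.
From mathcomp Require Import all_boot all_order all_algebra.
From mathcomp Require Import all_classical all_reals all_analysis.
From mathcomp Require Import ring lra.
Import Order.TTheory GRing.Theory Num.Theory.
Local Open Scope ring_scope.

Module Helpers.
Set Implicit Arguments. Unset Strict Implicit. Unset Printing Implicit Defensive.

Section Aux.
Variable R : realType.

Lemma sum_mxvec p q (F : 'I_(p * q) -> R) :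
  \sum_k F k = \sum_(i < p) \sum_(j < q) F (mxvec_index i j).
Proof.
rewrite pair_bigA /=.
rewrite (reindex (uncurry (@mxvec_index p q))) /=; last first.
  by apply: subon_bij (@curry_mxvec_bij p q).
by apply: eq_bigr => -[].
Qed.

Definition dotv p (u v : 'cV[R]_p) : R := (u^T *m v) 0 0.

Lemma dotvE p (u v : 'cV[R]_p) : dotv u v = \sum_i u i 0 * v i 0.
Proof. by rewrite /dotv mxE; apply: eq_bigr => i _; rewrite mxE. Qed.

Lemma vecE m k (A : 'M[R]_(m, k)) j a : vec A (mxvec_index j a) 0 = A a j.
Proof. by rewrite /vec mxE mxvecE mxE. Qed.

Lemma mxinnerE m k (A B : 'M[R]_(m, k)) :
  mxinner A B = \sum_(j < k) \sum_(a < m) A a j * B a j.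
Proof.
rewrite /mxinner /mxtrace; apply: eq_bigr => j _; rewrite mxE.
by apply: eq_bigr => a _; rewrite mxE.
Qed.

Lemma dotv_vec m k (A B : 'M[R]_(m, k)) : dotv (vec A) (vec B) = mxinner A B.
Proof.
rewrite dotvE sum_mxvec mxinnerE; apply: eq_bigr => j _; apply: eq_bigr => a _.
by rewrite !vecE.
Qed.

Lemma frob2E m k (A : 'M[R]_(m, k)) : frob2 A = mxinner A A.
Proof.
rewrite mxinnerE /frob2 exchange_big; apply: eq_bigr => j _; apply: eq_bigr => a _.
by rewrite expr2.
Qed.

Lemma sqnorm_dot p (u : 'cV[R]_p) : sqnorm u = dotv u u.
Proof. by rewrite dotvE /sqnorm; apply: eq_bigr => i _; rewrite expr2. Qed.

Lemma sqnorm_vec m k (A : 'M[R]_(m, k)) : sqnorm (vec A) = frob2 A.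
Proof. by rewrite sqnorm_dot dotv_vec frob2E. Qed.

Lemma vecD m k (A B : 'M[R]_(m, k)) : vec (A + B) = vec A + vec B.
Proof. by rewrite /vec !linearD. Qed.
Lemma vecB m k (A B : 'M[R]_(m, k)) : vec (A - B) = vec A - vec B.
Proof. by rewrite /vec !linearB. Qed.
Lemma vec_sum m k I (s : seq I) (F : I -> 'M[R]_(m, k)) :
  vec (\sum_(i <- s) F i) = \sum_(i <- s) vec (F i).
Proof.
elim: s => [|x s IH]; first by rewrite !big_nil /vec !linear0.
by rewrite !big_cons vecD IH.
Qed.

Definition unvec m k (l : 'cV[R]_(k * m)) : 'M[R]_(m, k) := (vec_mx l^T)^T.
Lemma unvecK m k (l : 'cV[R]_(k * m)) : vec (unvec l) = l.
Proof. by rewrite /vec /unvec trmxK vec_mxK trmxK. Qed.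
Lemma unvecE m k (l : 'cV[R]_(k * m)) a j : unvec l a j = l (mxvec_index j a) 0.
Proof. by rewrite !mxE. Qed.

End Aux.

Section Deriv.
Variable R : realType.
Variables (n r m : nat) (A : {linear 'M[R]_n -> 'cV[R]_m}).

Definition bil (E F : 'M[R]_n) : R := \sum_i (A E) i 0 * (A F) i 0.

Lemma expand_mx (X Y Z : 'M[R]_(n, r)) (s : R) :
  (X + s *: Y) *m (X + s *: Y)^T - Z *m Z^T =
  (X *m X^T - Z *m Z^T) + s *: (X *m Y^T + Y *m X^T) + s ^+ 2 *: (Y *m Y^T).
Proof.
rewrite linearD /= linearZ /= mulmxDl !mulmxDr -!scalemxAl -!scalemxAr scalerA -expr2.
rewrite scalerDr.
set a := X *m X^T; set b := X *m Y^T; set c := Y *m X^T; set d := Y *m Y^T.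
set e := Z *m Z^T.
set x := s *: b; set y := s *: c; set z := s ^+ 2 *: d.
by rewrite addrAC [a + x - e]addrAC !addrA.
Qed.

Definition cpoly (X Y Z : 'M[R]_(n, r)) : {poly R} :=
  let E := X *m X^T - Z *m Z^T in
  let G := X *m Y^T + Y *m X^T in
  let H := Y *m Y^T in
  (bil E E)%:P + (2 * bil E G) *: 'X + (bil G G + 2 * bil E H) *: 'X^2
  + (2 * bil G H) *: 'X^3 + (bil H H) *: 'X^4.

Lemma fA_horner (X Y Z : 'M[R]_(n, r)) :
  (fun s => fA A Z (X + s *: Y)) = horner (cpoly X Y Z).
Proof.
apply/funext => s; rewrite /fA expand_mx /cpoly /bil /=.
rewrite [A (_ + _)]linearD [A (_ + _)]linearD /= !linearZ /=.
move: (A (X *m X^T - Z *m Z^T)) (A (X *m Y^T + Y *m X^T)) (A (Y *m Y^T)) => a g h.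
rewrite !(hornerD, hornerZ, hornerC, hornerXn, hornerX) /sqnorm.
rewrite !(mulrDl, mulr_suml, mulr_sumr) -!big_split /=; apply: eq_bigr => i _.
rewrite !mxE; ring.
Qed.

Lemma grad_val (X Y Z : 'M[R]_(n, r)) :
  derive1 (fun s : R => fA A Z (X + s *: Y)) 0 =
  2 * bil (X *m X^T - Z *m Z^T) (X *m Y^T + Y *m X^T).
Proof.
rewrite fA_horner -derivE horner_coef0 coef_deriv /cpoly.
rewrite !(coefD, coefZ, coefC, coefXn, coefX) /=.
by rewrite !mulr0 !mulr1 !addr0 add0r mulr1n.
Qed.

Lemma hess_val (X Y Z : 'M[R]_(n, r)) :
  derive1n 2 (fun s : R => fA A Z (X + s *: Y)) 0 =
  2 * (bil (X *m Y^T + Y *m X^T) (X *m Y^T + Y *m X^T)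
       + 2 * bil (X *m X^T - Z *m Z^T) (Y *m Y^T)).
Proof.
rewrite derive1nS derive1n1 fA_horner -!derivE horner_coef0 !coef_deriv /cpoly.
rewrite !(coefD, coefZ, coefC, coefXn, coefX) /=.
rewrite !mulr0 !mulr1 !addr0 add0r mulr1n mulr2n; ring.
Qed.

End Deriv.

Section PSD.
Variable R : realType.
Variable N : nat.
Implicit Types (W : 'M[R]_N) (x y z : 'cV[R]_N).

Definition bf W x y : R := (x^T *m W *m y) 0 0.

Lemma bfDl W x y z : bf W (x + y) z = bf W x z + bf W y z.
Proof. by rewrite /bf linearD /= !mulmxDl mxE. Qed.
Lemma bfDr W x y z : bf W z (x + y) = bf W z x + bf W z y.
Proof. by rewrite /bf !mulmxDr mxE. Qed.
Lemma bfZl W k x z : bf W (k *: x) z = k * bf W x z.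
Proof. by rewrite /bf linearZ /= -!scalemxAl mxE. Qed.
Lemma bfZr W k x z : bf W z (k *: x) = k * bf W z x.
Proof. by rewrite /bf -!scalemxAr mxE. Qed.
Lemma bf_sym W x y : W^T = W -> bf W x y = bf W y x.
Proof.
move=> sW; have tE : forall M : 'M[R]_1, M 0 0 = M^T 0 0 by move=> M; rewrite mxE.
by rewrite /bf tE !trmx_mul !trmxK sW mulmxA.
Qed.
Lemma bf_delta W i j : bf W (delta_mx i 0) (delta_mx j 0) = W i j.
Proof. by rewrite /bf trmx_delta -rowE -colE !mxE. Qed.

Lemma psd_diag W i : psd W -> 0 <= W i i.
Proof. by case=> _ h; rewrite -bf_delta; apply: h. Qed.

Lemma psd_row0 W i j : psd W -> W i i = 0 -> W i j = 0.
Proof.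
move=> [sW h] a0; apply/eqP/negPn/negP => nz.
set b := W i j; set g := W j j.
pose lam := - (`|g| + 1) / (2 * b).
have := h (lam *: delta_mx i 0 + delta_mx j 0).
have Wji : W j i = b by rewrite /b -{1}sW mxE.
rewrite -/(bf W _ _) !(bfDl, bfDr, bfZl, bfZr) !bf_delta a0 Wji -/g.
have lb : lam * b = - (`|g| + 1) / 2.
  rewrite /lam; field; by rewrite nz.
have gn : g <= `|g| := ler_norm g.
rewrite !mulr0 add0r -/b lb; lra.
Qed.

Lemma bfNl W x z : bf W (- x) z = - bf W x z.
Proof. by rewrite -scaleN1r bfZl mulN1r. Qed.
Lemma bfNr W x z : bf W z (- x) = - bf W z x.
Proof. by rewrite -scaleN1r bfZr mulN1r. Qed.
Lemma bfB W1 W2 x y : bf (W1 - W2) x y = bf W1 x y - bf W2 x y.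
Proof. by rewrite /bf mulmxBr mulmxBl !mxE. Qed.
Lemma bfZ k W x y : bf (k *: W) x y = k * bf W x y.
Proof. by rewrite /bf -scalemxAr -scalemxAl mxE. Qed.
Lemma bf_outer W i x :
  bf (col i W *m (col i W)^T) x x = (bf W^T (delta_mx i 0) x) ^+ 2.
Proof.
have tE : forall M : 'M[R]_1, M 0 0 = M^T 0 0 by move=> M; rewrite mxE.
rewrite /bf mulmxA -[x^T *m col i W *m _ *m x]mulmxA mxE big_ord1 expr2.
have e2 : ((col i W)^T *m x) 0 0 = ((delta_mx i 0 : 'cV[R]_N)^T *m W^T *m x) 0 0.
  by rewrite (colE i W) trmx_mul.
rewrite -e2; congr (_ * _).
by rewrite tE trmx_mul trmxK.
Qed.

Lemma schur_psd W i : psd W ->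
  psd (W - (W i i)^-1 *: (col i W *m (col i W)^T)).
Proof.
move=> [sW h]; have a0 : 0 <= W i i by apply: (psd_diag i (conj sW h)).
split.
  by rewrite linearB /= linearZ /= trmx_mul trmxK sW.
move=> x; rewrite -/(bf _ x x) bfB bfZ bf_outer sW.
set a := W i i; set be := bf W (delta_mx i 0) x.
have [az|ap] := eqVneq a 0.
  by rewrite az invr0 mul0r subr0; apply: h.
have a_pos : 0 < a by rewrite lt_def ap a0.
have := h (x - (be / a) *: delta_mx i 0).
rewrite -/(bf _ _ _) !(bfDl, bfDr, bfNl, bfNr, bfZl, bfZr) .
rewrite (bf_sym x (delta_mx i 0) sW) -/be bf_delta -/a.
set q := bf W x x.
suff -> : q - be / a * be + (- (be / a * be) - be / a * - (be / a * a)) =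
  q - a^-1 * be ^+ 2 by [].
by field.
Qed.

Lemma psd_decomp_aux k : forall W, psd W ->
  (forall i j : 'I_N, (k <= i)%N -> W i j = 0) ->
  exists s : seq 'cV[R]_N, W = \sum_(l <- s) l *m l^T.
Proof.
elim: k => [|k IH] W pW hW.
  exists [::]; rewrite big_nil; apply/matrixP => i j; rewrite mxE; exact: hW.
have [kN|Nk] := ltnP k N; last first.
  apply: IH => // i j ki; exfalso; move: (ltn_ord i); rewrite ltnNge.
  by rewrite (leq_trans Nk ki).
pose i0 : 'I_N := Ordinal kN.
set a := W i0 i0.
pose l := (Num.sqrt a)^-1 *: col i0 W.
have a0 : 0 <= a by apply: psd_diag.
have ll : l *m l^T = a^-1 *: (col i0 W *m (col i0 W)^T).
  rewrite /l linearZ /= -scalemxAl -scalemxAr scalerA -invfM.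
  by rewrite -expr2 sqr_sqrtr.
have pW' := schur_psd i0 pW.
rewrite -/a -ll in pW'.
suff hW' : forall i j : 'I_N, (k <= i)%N ->
    (W - l *m l^T) i j = 0.
  have [s' hs'] := IH _ pW' hW'.
  by exists (l :: s'); rewrite big_cons -hs' addrC subrK.
move=> i j ki; rewrite ll !mxE big_ord1 !mxE.
have [ik|] := eqVneq (i : nat) k.
  have -> : i = i0 by apply: val_inj.
  have [az|anz] := eqVneq a 0.
    by rewrite (psd_row0 j pW az) az invr0 mul0r subr0.
  case: pW => sW _.
  have -> : W j i0 = W i0 j by rewrite -{1}sW mxE.
  by rewrite -/a mulrA mulVf // mul1r subrr.
move=> nik; have ki' : (k < i)%N by rewrite ltn_neqAle eq_sym nik ki.
by rewrite (hW i j ki') (hW i i0 ki') mul0r mulr0 subrr.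
Qed.

Lemma psd_decomp W : psd W -> exists s : seq 'cV[R]_N, W = \sum_(l <- s) l *m l^T.
Proof.
move=> pW; apply: (psd_decomp_aux (k := N)) => // i j; rewrite leqNgt ltn_ord.
by [].
Qed.

End PSD.

Section Proj.
Variable R : realType.

Lemma mulmx_tr_eq0 p q (M : 'M[R]_(p, q)) : M *m M^T = 0 -> M = 0.
Proof.
move=> h; apply/matrixP => i j; rewrite mxE.
have : (M *m M^T) i i = 0 by rewrite h mxE.
rewrite mxE => /eqP; rewrite psumr_eq0 => [/allP hall|k _]; last first.
  by rewrite mxE -expr2 sqr_ge0.
have := hall j (mem_index_enum j); rewrite mxE mulf_eq0 => /orP[] /eqP //.
Qed.

Lemma exists_proj n r (X Z : 'M[R]_(n, r)) : exists P : 'M[R]_n,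
  [/\ P^T = P, P *m P = P, P *m X = X, P *m Z = Z & (\rank P <= r + \rank Z)%N].
Proof.
pose M := col_mx X^T Z^T.
have hX : (X^T <= row_base M)%MS.
  rewrite (eq_row_base M) /M.
  have e : X^T = row_mx 1%:M 0 *m col_mx X^T Z^T by rewrite mul_row_col mul1mx mul0mx addr0.
  rewrite {1}e; exact: submxMl.
have hZ : (Z^T <= row_base M)%MS.
  rewrite (eq_row_base M) /M.
  have e : Z^T = row_mx 0 1%:M *m col_mx X^T Z^T by rewrite mul_row_col mul1mx mul0mx add0r.
  rewrite {1}e; exact: submxMl.
have rB : (\rank (row_base M) <= r + \rank Z)%N.
  rewrite (eq_row_base M) /M -addsmxE.
  apply: (leq_trans (mxrank_adds_leqif _ _)).
  by rewrite !mxrank_tr leq_add2r rank_leq_col.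
move: (row_base M) (row_base_free M) hX hZ rB => B Bfree {}hX {}hZ rB.
pose G := B *m B^T.
have Gu : G \in unitmx.
  rewrite -row_free_unit -kermx_eq0; apply/eqP.
  have hK := mulmx_ker G.
  have KB : kermx G *m B = 0.
    apply: mulmx_tr_eq0; rewrite trmx_mul mulmxA -[_ *m B *m _]mulmxA -/G hK.
    by rewrite mul0mx.
  apply: (row_free_inj Bfree); by rewrite KB mul0mx.
pose P := B^T *m invmx G *m B.
have PBt : P *m B^T = B^T by rewrite /P -mulmxA -/G mulmxKV.
have sub : forall Y : 'M[R]_(n, r), (Y^T <= B)%MS -> P *m Y = Y.
  move=> Y; case/submxP => D hD.
  by rewrite -[Y]trmxK hD trmx_mul mulmxA PBt.
exists P; split.
- by rewrite /P !trmx_mul trmxK trmx_inv /G trmx_mul trmxK mulmxA.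
  have PB : B *m P = B by rewrite /P !mulmxA -/G mulmxV // mul1mx.
  by rewrite {1}/P -[LHS]mulmxA PB.
- exact: sub.
- exact: sub.
apply: (leq_trans (mxrankM_maxr _ _)).
exact: rB.
Qed.
End Proj.

Section Inner.
Variable R : realType.

Lemma mxinnerC p q (M N : 'M[R]_(p, q)) : mxinner M N = mxinner N M.
Proof. by rewrite /mxinner -mxtrace_tr trmx_mul trmxK. Qed.
Lemma mxinnerDr p q (M N K : 'M[R]_(p, q)) : mxinner M (N + K) = mxinner M N + mxinner M K.
Proof. by rewrite /mxinner mulmxDr mxtraceD. Qed.
Lemma mxinnerNr p q (M N : 'M[R]_(p, q)) : mxinner M (- N) = - mxinner M N.
Proof. by rewrite /mxinner mulmxN raddfN. Qed.
Lemma mxinnerBr p q (M N K : 'M[R]_(p, q)) : mxinner M (N - K) = mxinner M N - mxinner M K.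
Proof. by rewrite mxinnerDr mxinnerNr. Qed.
Lemma mxinnerZr p q k (M N : 'M[R]_(p, q)) : mxinner M (k *: N) = k * mxinner M N.
Proof. by rewrite /mxinner -scalemxAr mxtraceZ. Qed.
Lemma mxinnerDl p q (M N K : 'M[R]_(p, q)) : mxinner (N + K) M = mxinner N M + mxinner K M.
Proof. by rewrite !(mxinnerC _ M) mxinnerDr. Qed.
Lemma mxinnerNl p q (M N : 'M[R]_(p, q)) : mxinner (- N) M = - mxinner N M.
Proof. by rewrite !(mxinnerC _ M) mxinnerNr. Qed.
Lemma mxinnerBl p q (M N K : 'M[R]_(p, q)) : mxinner (N - K) M = mxinner N M - mxinner K M.
Proof. by rewrite !(mxinnerC _ M) mxinnerBr. Qed.
Lemma mxinnerZl p q k (M N : 'M[R]_(p, q)) : mxinner (k *: N) M = k * mxinner N M.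
Proof. by rewrite !(mxinnerC _ M) mxinnerZr. Qed.
Lemma frob2_ge0 p q (M : 'M[R]_(p, q)) : 0 <= frob2 M.
Proof. by apply: sumr_ge0 => i _; apply: sumr_ge0 => j _; apply: sqr_ge0. Qed.

End Inner.

Section Bil.
Variable R : realType.
Variables (n m : nat) (A : {linear 'M[R]_n -> 'cV[R]_m}).

Lemma bilC E F : bil A E F = bil A F E.
Proof. by apply: eq_bigr => i _; rewrite mulrC. Qed.
Lemma bilDr E F K : bil A E (F + K) = bil A E F + bil A E K.
Proof. by rewrite /bil -big_split; apply: eq_bigr => i _; rewrite linearD !mxE mulrDr. Qed.
Lemma bilZr E F k : bil A E (k *: F) = k * bil A E F.
Proof. by rewrite /bil mulr_sumr; apply: eq_bigr => i _; rewrite linearZ !mxE mulrCA. Qed.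
Lemma bilNr E F : bil A E (- F) = - bil A E F.
Proof. by rewrite -scaleN1r bilZr mulN1r. Qed.
Lemma bilBr E F K : bil A E (F - K) = bil A E F - bil A E K.
Proof. by rewrite bilDr bilNr. Qed.
Lemma bil_sumr E I (s : seq I) (F : I -> 'M[R]_n) :
  bil A E (\sum_(i <- s) F i) = \sum_(i <- s) bil A E (F i).
Proof.
elim: s => [|x s IH]; first by rewrite !big_nil /bil big1 // => i _; rewrite linear0 mxE mulr0.
by rewrite !big_cons bilDr IH.
Qed.
Lemma bilDl E F K : bil A (F + K) E = bil A F E + bil A K E.
Proof. by rewrite !(bilC _ E) bilDr. Qed.
Lemma bilBl E F K : bil A (F - K) E = bil A F E - bil A K E.
Proof. by rewrite !(bilC _ E) bilBr. Qed.
Lemma bilNl E F : bil A (- F) E = - bil A F E.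
Proof. by rewrite !(bilC _ E) bilNr. Qed.
Lemma bilZl E F k : bil A (k *: F) E = k * bil A F E.
Proof. by rewrite !(bilC _ E) bilZr. Qed.
Lemma bil_sq E : bil A E E = sqnorm (A E).
Proof. by apply: eq_bigr => i _; rewrite expr2. Qed.

Lemma polar (E F : 'M[R]_n) (nu d mu : R) (p : nat) :
  0 < nu -> 0 < mu ->
  (forall M, (\rank M <= p)%N ->
     (1 - d) * frob2 M <= sqnorm (A M) / nu /\ sqnorm (A M) / nu <= (1 + d) * frob2 M) ->
  (forall a b : R, (\rank (a *: E + b *: F)%R <= p)%N) ->
  nu * (mxinner E F - d * (mu * frob2 E + frob2 F / mu) / 2) <= bil A E F.
Proof.
move=> nu0 mu0 rip rk.
have [h1 _] := rip _ (rk mu 1).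
have [_ h2] := rip _ (rk mu (-1)).
rewrite !scaleN1r !scale1r in h1 h2.
rewrite ler_pdivlMr // in h1; rewrite ler_pdivrMr // in h2.
rewrite -!bil_sq !frob2E in h1 h2.
rewrite !(bilDl, bilDr, bilBl, bilBr, bilZl, bilZr, bilNr, bilNl, mxinnerNl, mxinnerDl, mxinnerDr, mxinnerBl,
  mxinnerBr, mxinnerZl, mxinnerZr, mxinnerNr) in h1 h2.
rewrite (bilC F E) (mxinnerC F E) !frob2E in h1 h2 *.
set b := bil A E E in h1 h2; set c := bil A F F in h1 h2.
set e := bil A E F in h1 h2 *.
set x := mxinner E E in h1 h2 *; set y := mxinner F F in h1 h2 *.
set z := mxinner E F in h1 h2 *.
have mu4 : 0 < 4 * mu by rewrite mulr_gt0.
rewrite -(ler_pM2l mu4).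
have -> : 4 * mu * (nu * (z - d * (mu * x + y / mu) / 2)) =
  nu * (4 * mu * z - 2 * d * (mu * mu * x + y)) by field; rewrite gt_eqF.
lra.
Qed.

End Bil.

Section Core.
Variable R : realType.
Variables (n r m : nat) (A : {linear 'M[R]_n -> 'cV[R]_m}).
Variables (X Z : 'M[R]_(n, r)) (P : 'M[R]_n).
Hypotheses (sP : P^T = P) (iP : P *m P = P) (PX : P *m X = X) (PZ : P *m Z = Z).

Local Notation Pi M := (P *m M *m P).
Local Notation Gm Y := (X *m Y^T + Y *m X^T).
Local Notation Ee := (X *m X^T - Z *m Z^T).

Lemma XtP : X^T *m P = X^T.
Proof. by rewrite -sP -trmx_mul PX. Qed.
Lemma ZtP : Z^T *m P = Z^T.
Proof. by rewrite -sP -trmx_mul PZ. Qed.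

Lemma PiB (M N : 'M[R]_n) : Pi (M - N) = Pi M - Pi N.
Proof. by rewrite mulmxBr mulmxBl. Qed.
Lemma PiD (M N : 'M[R]_n) : Pi (M + N) = Pi M + Pi N.
Proof. by rewrite mulmxDr mulmxDl. Qed.
Lemma Pi_sum I (s : seq I) (F : I -> 'M[R]_n) :
  Pi (\sum_(i <- s) F i) = \sum_(i <- s) Pi (F i).
Proof. by rewrite mulmx_sumr mulmx_suml. Qed.

Lemma PiE : Pi Ee = Ee.
Proof. by rewrite PiB !mulmxA PX PZ -!mulmxA XtP ZtP. Qed.
Lemma PiG (Y : 'M[R]_(n, r)) : Pi (Gm Y) = Gm (P *m Y).
Proof. by rewrite PiD !mulmxA PX -!mulmxA XtP trmx_mul sP. Qed.
Lemma PiYY (Y : 'M[R]_(n, r)) : Pi (Y *m Y^T) = (P *m Y) *m (P *m Y)^T.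
Proof. by rewrite trmx_mul sP !mulmxA. Qed.

Lemma inner_Pi (M N : 'M[R]_n) : mxinner (Pi M) N = mxinner M (Pi N).
Proof.
rewrite /mxinner !trmx_mul sP.
by rewrite -!mulmxA mxtrace_mulC !mulmxA.
Qed.

Lemma frob_Pi (M : 'M[R]_n) : frob2 (Pi M) <= frob2 M.
Proof.
have e : M = Pi M + (M - Pi M) by rewrite addrC subrK.
have o : mxinner (Pi M) (M - Pi M) = 0.
  have PP : Pi (Pi M) = Pi M by rewrite !mulmxA iP -!mulmxA iP !mulmxA.
  by rewrite mxinnerBr !inner_Pi PP subrr.
have key : mxinner M M = mxinner (Pi M + (M - Pi M)) (Pi M + (M - Pi M)) by rewrite -e.
rewrite !frob2E key; move: o; set D := M - Pi M => o; clearbody D.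
rewrite mxinnerDl !mxinnerDr o (mxinnerC D) o.
have := frob2_ge0 D; rewrite frob2E; lra.
Qed.


Lemma PiLin a b (M N : 'M[R]_n) : a *: Pi M + b *: Pi N = Pi (a *: M + b *: N).
Proof. by rewrite PiD -!scalemxAr -!scalemxAl. Qed.

Lemma core (nu d : R) (p : nat) (Y0 : 'M[R]_(n, r)) (Ys : seq 'M[R]_(n, r)) :
  (\rank P <= p)%N -> 0 < nu -> 0 <= d ->
  (forall M, (\rank M <= p)%N ->
     (1 - d) * frob2 M <= sqnorm (A M) / nu /\ sqnorm (A M) / nu <= (1 + d) * frob2 M) ->
  (forall Y, bil A Ee (Gm Y) = 0) ->
  (forall Y, 0 <= bil A (Gm Y) (Gm Y) + 2 * bil A Ee (Y *m Y^T)) ->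
  0 < frob2 Ee -> 0 < frob2 (Gm Y0 - \sum_(Y <- Ys) Y *m Y^T) ->
  mxinner Ee (Gm Y0 - \sum_(Y <- Ys) Y *m Y^T) <=
   d * (Num.sqrt (frob2 Ee) * Num.sqrt (frob2 (Gm Y0 - \sum_(Y <- Ys) Y *m Y^T))
        + (\sum_(Y <- Ys) frob2 (Gm Y)) / 2)
   + (\sum_(Y <- Ys) frob2 (Gm Y)) / 2.
Proof.
move=> hP nu0 d0 rip grad hess fE0 fV0.
set V := Gm Y0 - _ in fV0 *.
set T := \sum_(Y <- Ys) frob2 (Gm Y).
have rkPi : forall M, (\rank (Pi M) <= p)%N.
  by move=> M; apply: leq_trans (mxrankM_maxr _ _) hP.
have V'E : Pi V = Gm (P *m Y0) - \sum_(Y <- Ys) (P *m Y) *m (P *m Y)^T.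
  rewrite /V PiB PiG Pi_sum; congr (_ - _); apply: eq_bigr => Y _; exact: PiYY.
have inner_eq : mxinner Ee V = mxinner Ee (Pi V) by rewrite -{1}PiE inner_Pi.
have fV' : frob2 (Pi V) <= frob2 V := frob_Pi V.
have up : bil A Ee (Pi V) <= nu * (1 + d) * T / 2.
  rewrite V'E bilBr grad sub0r bil_sumr -sumrN /T mulr_sumr mulr_suml.
  apply: ler_sum => Y _.
  have h := hess (P *m Y).
  have [_ ru] := rip _ (rkPi (Gm Y)).
  rewrite PiG ler_pdivrMr // -bil_sq in ru.
  have fG : frob2 (Gm (P *m Y)) <= frob2 (Gm Y) by rewrite -PiG; apply: frob_Pi.
  have c0 : 0 <= nu * (1 + d) by rewrite mulr_ge0 // ?ltW //; lra.
  have := ler_wpM2l c0 fG.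
  set b := bil A _ _ in h ru; set f := bil A _ _ in h.
  move=> hh; rewrite -/f; lra.
set sE := Num.sqrt (frob2 Ee); set sV := Num.sqrt (frob2 V).
have sE0 : 0 < sE by rewrite sqrtr_gt0.
have sV0 : 0 < sV by rewrite sqrtr_gt0.
have mu0 : 0 < sV / sE by rewrite divr_gt0.
have rk2 : forall a b : R, (\rank (a *: Ee + b *: Pi V)%R <= p)%N.
  move=> a b; have -> : a *: Ee + b *: Pi V = Pi (a *: Ee + b *: V)%R.
    by rewrite -PiLin PiE.
  exact: rkPi.
have lo := @polar R n m A Ee (Pi V) nu d (sV / sE) p nu0 mu0 rip rk2.
have fEe : frob2 Ee = sE ^+ 2 by rewrite sqr_sqrtr // ltW.
have fVe : frob2 V = sV ^+ 2 by rewrite sqr_sqrtr // ltW.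
have q1 : sV / sE * frob2 Ee = sE * sV.
  by rewrite fEe; field; rewrite gt_eqF.
have q2 : frob2 (Pi V) / (sV / sE) <= sE * sV.
  apply: le_trans (_ : frob2 V / (sV / sE) <= _).
    by rewrite ler_pM2r // invr_gt0.
  by rewrite fVe le_eqVlt; apply/orP; left; apply/eqP; field; rewrite !gt_eqF.
have H := le_trans lo up.
have e : nu * (1 + d) * T / 2 = nu * ((1 + d) * T / 2) by ring.
rewrite e ler_pM2l // in H.
have dq : d * (sV / sE * frob2 Ee + frob2 (Pi V) / (sV / sE)) <= d * (2 * (sE * sV)).
  by apply: ler_wpM2l => //; lra.
rewrite inner_eq; lra.
Qed.

End Core.

Section Final.
Variable R : realType.
Variables (n r : nat).

Lemma sum_blk (s : seq 'cV[R]_(r * n)) :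
  \sum_(i < r) blk (\sum_(l <- s) l *m l^T) i i =
  \sum_(l <- s) unvec l *m (unvec l)^T.
Proof.
apply/matrixP => a b; rewrite !summxE.
under eq_bigr => i _ do rewrite mxE summxE.
rewrite exchange_big /=; apply: eq_bigr => l _.
rewrite mxE; apply: eq_bigr => i _.
by rewrite !mxE big_ord1 !mxE.
Qed.

Lemma wvec_decomp (s : seq 'cV[R]_(r * n)) :
  wvec (\sum_(l <- s) l *m l^T) = vec (\sum_(l <- s) unvec l *m (unvec l)^T).
Proof. by rewrite /wvec -vec_sum sum_blk. Qed.

Lemma mxinner_sumr p q (M : 'M[R]_(p, q)) I (s : seq I) (F : I -> 'M[R]_(p, q)) :
  mxinner M (\sum_(i <- s) F i) = \sum_(i <- s) mxinner M (F i).
Proof.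
elim: s => [|x s IH]; first by rewrite !big_nil /mxinner mulmx0 linear0.
by rewrite !big_cons mxinnerDr IH.
Qed.

Lemma inner_outer (J : 'M[R]_(n * n, r * n)) (l : 'cV[R]_(r * n)) :
  mxinner (J^T *m J) (l *m l^T) = sqnorm (J *m l).
Proof.
rewrite /mxinner trmx_mul trmxK mulmxA mxtrace_mulC /mxtrace big_ord1.
by rewrite sqnorm_dot /dotv trmx_mul !mulmxA.
Qed.

Lemma frob2_eq0 p q (M : 'M[R]_(p, q)) : frob2 M = 0 -> M = 0.
Proof.
move=> h; apply/matrixP => i j; rewrite mxE.
have h1 := psumr_eq0P (fun i _ => sumr_ge0 _ (fun j _ => sqr_ge0 (M i j))) h.
have := psumr_eq0P (fun j _ => sqr_ge0 (M i j)) (h1 i isT).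
by move=> /(_ j isT) /eqP; rewrite sqrf_eq0 => /eqP.
Qed.

Lemma frob2_gt0 p q (M : 'M[R]_(p, q)) : M != 0 -> 0 < frob2 M.
Proof.
move=> nz; rewrite lt_def frob2_ge0 andbT; apply/eqP => /frob2_eq0 h.
by rewrite h eqxx in nz.
Qed.

End Final.

End Helpers.
Import Helpers.

Theorem lemma14 (R : realType) (n r : nat) (X Z : 'M[R]_(n, r))
  (J : 'M[R]_(n * n, r * n))
  (HJ : forall Y : 'M[R]_(n, r), J *m vec Y = vec (X *m Y^T + Y *m X^T))
  (HXZ : X *m X^T != Z *m Z^T) :
  forall (t c : R), 0 <= t -> cos_theta_value X Z J t c ->
    (((c - t) / (1 + t))%:E <= delta_XZ X Z)%E.
Proof.
move=> t c t0 [y [W /= [vnz [pW [hT hc]]]]].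
rewrite /delta_XZ; apply: le_ereal_inf_tmp => _ [d hd <-]; rewrite lee_fin.
case: hd => m [m1 [A [[/andP [d0 d1] [nu [nu0 rip]]] [gz hp]]]].
have [s hs] := psd_decomp pW.
have [P [sP iP PX PZ rP]] := exists_proj X Z.
set Ee := X *m X^T - Z *m Z^T.
set Y0 := unvec y.
set S := \sum_(l <- s) unvec l *m (unvec l)^T.
set V := (X *m Y0^T + Y0 *m X^T) - S.
have vE : J *m y - wvec W = vec V.
  by rewrite hs wvec_decomp -{1}(unvecK y) HJ vecB.
have eE : evec X Z = vec Ee by [].
have TE : mxinner (J^T *m J) W = \sum_(Y <- map (@unvec R n r) s) frob2 (X *m Y^T + Y *m X^T).
  rewrite hs mxinner_sumr big_map; apply: eq_bigr => l _.
  by rewrite inner_outer -{1}(unvecK l) HJ sqnorm_vec.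
have SE : S = \sum_(Y <- map (@unvec R n r) s) Y *m Y^T by rewrite big_map.
rewrite vE eE TE in hT hc.
rewrite /enorm !sqnorm_vec -/(dotv _ _) dotv_vec in hT hc.
have fE0 : 0 < frob2 Ee by apply: frob2_gt0; rewrite subr_eq0.
have fV0 : 0 < frob2 V.
  apply: frob2_gt0; apply: contraNneq vnz; rewrite vE => ->.
  by rewrite /vec !linear0.
have gradE : forall Y, bil A Ee (X *m Y^T + Y *m X^T) = 0.
  move=> Y; have := gz Y; rewrite grad_val => /eqP; rewrite mulf_eq0 => /orP[|/eqP //].
  by rewrite pnatr_eq0.
have hessE : forall Y, 0 <= bil A (X *m Y^T + Y *m X^T) (X *m Y^T + Y *m X^T)
    + 2 * bil A Ee (Y *m Y^T).
  by move=> Y; have := hp Y; rewrite hess_val pmulr_rge0.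
have key := core sP iP PX PZ rP nu0 d0 rip gradE hessE fE0.
rewrite /V SE in fV0 hT hc.
have {key} key := key Y0 (map (@unvec R n r) s) fV0.
set b := Num.sqrt (frob2 Ee) * _ in key hT hc.
set T := \sum_(Y <- _) frob2 _ in key hT.
set z := mxinner Ee _ in key hc.
have b0 : 0 < b by rewrite mulr_gt0 // sqrtr_gt0.
have tE : t = T / b / 2 by rewrite hT; field.
rewrite ler_pdivrMr; last lra.
have k2 : z - T / 2 <= d * (b + T / 2) by lra.
have e1 : c - t = (z - T / 2) / b by rewrite hc tE; field; rewrite gt_eqF.
have e2 : d * (1 + t) = d * (b + T / 2) / b by rewrite tE; field; rewrite gt_eqF.
by rewrite e1 e2 ler_pM2r // invr_gt0.
Qed.
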